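(* The triple $(\mathcal{E}, \nabla^{\mathrm{sp}}, \gamma)$ with $\mathcal{E} = A^{4}$, $\nabla^{\mathrm{sp}}(e_{\alpha}) = 0$ (extended by the left Leibniz rule) and $\gamma(\mathrm{d} z^{i}\otimes_{A} e_{\alpha}) = \gamma_{\theta}^{i}\, e_{\alpha}$ (extended left $A$-linearly) is a spinorial structure on the Riemannian structure $(g,(\nabla,\sigma))$ on $\mathbb{R}^4_\theta$, i.e.\ it satisfies the Clifford relations $\gamma_{[2]}(\omega\otimes_A\zeta\otimes_A s)+\gamma_{[2]}(\sigma(\omega\otimes_A\zeta)\otimes_A s) = -2\,g^{-1}(\omega\otimes_A\zeta)\,s$ and Clifford compatibility $\nabla^{\mathrm{sp}}\circ\gamma = (\mathrm{id}\otimes_A\gamma)\circ\nabla^\otimes$.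
   Context: Let $A = \mathbb{C}[z^{1},z^{2},z^{3},z^{4}]/(z^{i} z^{j} - R^{ji} z^{j} z^{i})$ be the algebra of $\mathbb{R}^4_\theta$ in complex coordinates ($z^3=\overline{z^1}$, $z^4=\overline{z^2}$), where $R$ is the matrix with rows $(1,e^{-i\theta},1,e^{i\theta})$, $(e^{i\theta},1,e^{-i\theta},1)$, $(1,e^{i\theta},1,e^{-i\theta})$, $(e^{-i\theta},1,e^{i\theta},1)$, $\theta\in\mathbb{R}$. The differential calculus $\Omega^1_A$ is the free left $A$-module with basis $\mathrm{d} z^i$, with right action $\mathrm{d} z^i\, z^j = R^{ji} z^j\,\mathrm{d} z^i$ and $\mathrm{d}(z^i)=\mathrm{d} z^i$. The metric is $g=\sum_{i,j} g_{ij}\,\mathrm{d} z^i\otimes_A\mathrm{d} z^j$ with $(g_{ij}) = \tfrac{1}{2}$ times the matrix with rows $(0,0,1,0),(0,0,0,1),(1,0,0,0),(0,1,0,0)$, inverse metric $g^{-1}(\mathrm{d} z^i\otimes_A\mathrm{d} z^j)=g^{ij}$ with $(g^{ij})$ equal to $2$ times the same matrix. The bimodule connection is $\nabla(\mathrm{d} z^i)=0$ (left Leibniz rule) and $\sigma(\mathrm{d} z^i\otimes_A\mathrm{d} z^j) = R^{ji}\,\mathrm{d} z^j\otimes_A\mathrm{d} z^i$. $\{e_\alpha\}$ is the standard basis of $A^4$. The deformed gamma matrices are, in $2\times 2$ block form with Pauli matrices $\sigma^k$ and identity $I_2$: $\gamma_\theta^{1}$ has off-diagonal blocks $e^{\frac{i}{4}\theta}(-\sigma^{1}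 - i\sigma^{2})$ (upper right) and $e^{-\frac{i}{4}\theta}(\sigma^{1} + i\sigma^{2})$ (lower left); $\gamma_\theta^{2}$: $e^{-\frac{i}{4}\theta}(-\sigma^{3} - I_{2})$ and $e^{\frac{i}{4}\theta}(\sigma^{3} -I_{2})$; $\gamma_\theta^{3}$: $e^{\frac{i}{4}\theta}(-\sigma^{1} + i\sigma^{2})$ and $e^{-\frac{i}{4}\theta}(\sigma^{1} - i\sigma^{2})$; $\gamma_\theta^{4}$: $e^{-\frac{i}{4}\theta}(-\sigma^{3} + I_{2})$ and $e^{\frac{i}{4}\theta}(\sigma^{3} + I_{2})$. Here $\gamma_{[2]} = \gamma\circ(\mathrm{id}\otimes_A\gamma)$ and $\nabla^\otimes(\omega\otimes_A s) = \nabla(\omega)\otimes_A s + (\sigma\otimes_A\mathrm{id})(\omega\otimes_A\nabla^{\mathrm{sp}}(s))$. *)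

(* Defs.v *)
From HB Require Import structures.
From mathcomp Require Import all_boot all_order all_algebra.
From mathcomp Require Import all_classical all_reals all_analysis.
From mathcomp Require Import complex.

Set Implicit Arguments.
Unset Strict Implicit.
Unset Printing Implicit Defensive.

Import Order.TTheory GRing.Theory Num.Theory.
Local Open Scope ring_scope.

Section R4theta.
Variable R : realType.
Local Notation C := (R[i]).

Definition eix (x : R) : C := Complex (cos x) (sin x).

Definition ci : C := Complex 0 1.

(** Index conventions: the paper's indices 1,2,3,4 are the ordinals 0,1,2,3 of 'I_4. *)

(** The matrix R; Rmat theta j i is the entry R^{ji} (row j, column i). *)
Definition mx_of_seq (n : nat) (l : seq (seq C)) : 'M[C]_n :=
  \matrix_(i < n, j < n) nth 0 (nth [::] l i) j.

Definition Rmat (theta : R) : 'M[C]_4 :=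
  mx_of_seq 4
   [:: [:: 1; eix (- theta); 1; eix theta];
       [:: eix theta; 1; eix (- theta); 1];
       [:: 1; eix theta; 1; eix (- theta)];
       [:: eix (- theta); 1; eix theta; 1] ].

Definition Pmat : 'M[C]_4 :=
  mx_of_seq 4
   [:: [:: 0; 0; 1; 0]; [:: 0; 0; 0; 1]; [:: 1; 0; 0; 0]; [:: 0; 1; 0; 0] ].

Definition gmet : 'M[C]_4 := 2^-1 *: Pmat.
Definition ginv : 'M[C]_4 := 2 *: Pmat.

Definition pauli1 : 'M[C]_2 := mx_of_seq 2 [:: [:: 0; 1]; [:: 1; 0]].
Definition pauli2 : 'M[C]_2 := mx_of_seq 2 [:: [:: 0; - ci]; [:: ci; 0]].
Definition pauli3 : 'M[C]_2 := mx_of_seq 2 [:: [:: 1; 0]; [:: 0; -1]].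

Definition offdiag (U L : 'M[C]_2) : 'M[C]_4 := block_mx 0 U L 0.

Definition gamma_theta (theta : R) (i : 'I_4) : 'M[C]_4 :=
  let q := eix (theta / 4) in let qi := eix (- (theta / 4)) in
  [:: offdiag (q *: (- pauli1 - ci *: pauli2)) (qi *: (pauli1 + ci *: pauli2));
      offdiag (qi *: (- pauli3 - 1%:M)) (q *: (pauli3 - 1%:M));
      offdiag (q *: (- pauli1 + ci *: pauli2)) (qi *: (pauli1 - ci *: pauli2));
      offdiag (qi *: (- pauli3 + 1%:M)) (q *: (pauli3 + 1%:M)) ]`_i.

(** ** The algebra A = C[z^1,..,z^4]/(z^i z^j - R^{ji} z^j z^i).
    It has the PBW basis of ordered monomials z^m = (z^1)^{m_1}(z^2)^{m_2}(z^3)^{m_3}(z^4)^{m_4};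
    an element is represented by its coefficient function mon -> C (finitely supported). *)
Definition mon := 'I_4 -> nat.
Definition Aelt := mon -> C.

Definition finsupp (a : Aelt) : Prop :=
  exists N : nat, forall m : mon, a m != 0 -> forall i, (m i < N)%N.

Definition Azero : Aelt := fun _ => 0.
Definition Aadd (a b : Aelt) : Aelt := fun m => a m + b m.
Definition Ascale (c : C) (a : Aelt) : Aelt := fun m => c * a m.
Definition Aone : Aelt := fun m => if [forall k, m k == 0%N] then 1 else 0.
Definition Az (i : 'I_4) : Aelt :=
  fun m => if [forall k, m k == (if k == i then 1 else 0)%N] then 1 else 0.

(** z^a z^b = (prod_{i > j} (R^{ji})^{a_i b_j}) z^{a+b} *)
Definition twist (theta : R) (a b : mon) : C :=
  \prod_(i < 4) \prod_(j < 4 | (j < i)%N) (Rmat theta j i) ^+ (a i * b j).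

Definition Amul (theta : R) (a b : Aelt) : Aelt := fun m =>
  \sum_(k : {dffun forall i : 'I_4, 'I_(m i).+1})
     let k1 : mon := fun i => nat_of_ord (k i) in
     let k2 : mon := fun i => (m i - k i)%N in
     twist theta k1 k2 * a k1 * b k2.

(** right action of A on the basis dz^k : dz^k a = phi_k(a) dz^k,
    determined by dz^k z^j = R^{jk} z^j dz^k. *)
Definition phiA (theta : R) (k : 'I_4) (a : Aelt) : Aelt :=
  fun m => (\prod_(j < 4) (Rmat theta j k) ^+ (m j)) * a m.

(** ** Free left A-modules, in coordinates w.r.t. their bases:
    Omega^1 (basis dz^i), E = A^4 (basis e_alpha), and the tensor products over A
    Omega^1 (x)_A E (basis dz^i (x) e_alpha), Omega^1 (x)_A Omega^1 (basis dz^i (x) dz^j),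
    Omega^1 (x)_A Omega^1 (x)_A E (basis dz^i (x) dz^j (x) e_alpha). *)
Definition Om1 := 'I_4 -> Aelt.
Definition Esp := 'I_4 -> Aelt.
Definition Om1E := 'I_4 -> 'I_4 -> Aelt.
Definition Om2 := 'I_4 -> 'I_4 -> Aelt.
Definition Om2E := 'I_4 -> 'I_4 -> 'I_4 -> Aelt.

(** (sum_i w_i dz^i) (x) (sum_a s_a e_a) = sum w_i phi_i(s_a) dz^i (x) e_a *)
Definition tensOE (theta : R) (w : Om1) (s : Esp) : Om1E :=
  fun i a => Amul theta (w i) (phiA theta i (s a)).
Definition tensOO (theta : R) (w z : Om1) : Om2 :=
  fun i j => Amul theta (w i) (phiA theta i (z j)).
Definition tens2E (theta : R) (W : Om2) (s : Esp) : Om2E :=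
  fun i j a => Amul theta (W i j) (phiA theta i (phiA theta j (s a))).
Definition tensO1E (theta : R) (w : Om1) (U : Om1E) : Om2E :=
  fun i j a => Amul theta (w i) (phiA theta i (U j a)).

Definition addE (s t : Esp) : Esp := fun a => Aadd (s a) (t a).
Definition addOE (s t : Om1E) : Om1E := fun i a => Aadd (s i a) (t i a).
Definition add2E (s t : Om2E) : Om2E := fun i j a => Aadd (s i j a) (t i j a).

(** sigma(dz^i (x) dz^j) = R^{ji} dz^j (x) dz^i, extended left A-linearly *)
Definition sigmaO (theta : R) (W : Om2) : Om2 :=
  fun j i m => Rmat theta j i * W i j m.
Definition sigma_id (theta : R) (V : Om2E) : Om2E :=
  fun j i a m => Rmat theta j i * V i j a m.

Definition ginvA (W : Om2) : Aelt := fun m => \sum_(i < 4) \sum_(j < 4) W i j m * ginv i j.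

Definition gammaA (theta : R) (T : Om1E) : Esp :=
  fun b m => \sum_(i < 4) \sum_(a < 4) T i a m * gamma_theta theta i b a.
Definition id_gammaA (theta : R) (V : Om2E) : Om1E :=
  fun i b m => \sum_(j < 4) \sum_(a < 4) V i j a m * gamma_theta theta j b a.
Definition gamma2A (theta : R) (V : Om2E) : Esp := gammaA theta (id_gammaA theta V).

(** d : A -> Omega^1, given in coordinates: d a = sum_k (d a k) dz^k. *)
Definition is_differential (theta : R) (d : Aelt -> 'I_4 -> Aelt) : Prop :=
  [/\ forall a b, finsupp a -> finsupp b -> d (Aadd a b) = fun k => Aadd (d a k) (d b k),
      forall c a, finsupp a -> d (Ascale c a) = fun k => Ascale c (d a k),
      forall a b, finsupp a -> finsupp b ->
        d (Amul theta a b) = fun k => Aadd (Amul theta a (d b k)) (Amul theta (d a k) (phiA theta k b))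
    & forall i, d (Az i) = fun k => if k == i then Aone else Azero].

(** Levi-Civita connection: nabla(dz^i) = 0, left Leibniz: nabla(sum_i w_i dz^i) = sum_i d w_i (x) dz^i *)
Definition nablaO (d : Aelt -> 'I_4 -> Aelt) (w : Om1) : Om2 := fun k i => d (w i) k.
Definition nabla_sp (d : Aelt -> 'I_4 -> Aelt) (s : Esp) : Om1E := fun k a => d (s a) k.
Definition nabla_tens (theta : R) (d : Aelt -> 'I_4 -> Aelt) (w : Om1) (s : Esp) : Om2E :=
  add2E (tens2E theta (nablaO d w) s) (sigma_id theta (tensO1E theta w (nabla_sp d s))).

End R4theta.

(* Main.v *)
Require Import Defs.
From HB Require Import structures.
From mathcomp Require Import all_boot all_order all_algebra.
From mathcomp Require Import all_classical all_reals all_analysis.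
From mathcomp Require Import complex.
From mathcomp Require Import ring lra zify.
Import GRing.Theory Num.Theory.
Local Open Scope ring_scope.
Section A.
Variable R : realType.
Variable theta : R.
Local Notation C := (R[i]).
Local Notation Amul := (Amul theta).

Definition mkd (m k0 : mon) : {dffun forall i : 'I_4, 'I_(m i).+1} :=
  finfun (fun i => (inord (k0 i) : 'I_(m i).+1)).

Lemma sum_dffun1 (m k0 : mon) (G : {dffun forall i : 'I_4, 'I_(m i).+1} -> C) :
  (forall k, G k != 0 -> forall i, (k i : nat) = k0 i) ->
  \sum_k G k = if [forall i, k0 i <= m i]%N then G (mkd m k0) else 0.
Proof.
move=> H; case: ifP => h.
  rewrite (bigD1 (mkd m k0)) //= big1 ?addr0 // => k hk.
  apply/eqP; apply: contraR hk => /H hk'; apply/eqP/ffunP => i; apply/val_inj.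
  rewrite /mkd ffunE /= inordK ?hk' // ltnS; exact: (forallP h i).
apply: big1 => k _; apply/eqP; apply: contraFT h => /H hk.
apply/forallP => i; rewrite -hk -ltnS; exact: ltn_ord.
Qed.

Lemma mkdE m k0 i : (k0 i <= m i)%N -> (mkd m k0 i : nat) = k0 i.
Proof. by move=> h; rewrite /mkd ffunE inordK // ltnS. Qed.

Lemma mkd_fun m k0 : [forall i, k0 i <= m i]%N -> (fun i => (mkd m k0 i : nat)) = k0.
Proof. move=> /forallP h; apply: funext => i; exact: mkdE. Qed.

End A.
Lemma mkd_fun2 m k0 : [forall i, k0 i <= m i]%N -> (fun i => (m i - mkd m k0 i)%N) = (fun i => m i - k0 i)%N.
Proof. move=> /forallP h; apply: funext => i; by rewrite mkdE. Qed.
Section B.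
Variable R : realType.
Variable theta : R.
Local Notation C := (R[i]).
Local Notation Amul := (Amul theta).
Local Notation twist := (twist theta).

Definition emon (i : 'I_4) : mon := fun j => nat_of_bool (j == i).

Lemma Az_neq0 i m : Az R i m != 0 -> forall j, m j = emon i j.
Proof. rewrite /Az; case: ifP => [/forallP h _ j|]; last by rewrite eqxx.
by apply/eqP; rewrite (h j) /emon; case: (j == i). Qed.

Lemma Az_e i : Az R i (emon i) = 1.
Proof. by rewrite /Az; have -> : [forall k, emon i k == (if k == i then 1 else 0)%N] by apply/forallP => k; rewrite /emon; case: (k == i). Qed.

Lemma Aone_neq0 m : Aone R m != 0 -> forall j, m j = 0%N.
Proof. rewrite /Aone; case: ifP => [/forallP h _ j|]; last by rewrite eqxx.
by apply/eqP; rewrite (h j). Qed.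

Lemma Aone0 : Aone R (fun _ => 0%N) = 1.
Proof. by rewrite /Aone; have -> : [forall k : 'I_4, (0 == 0)%N] by apply/forallP. Qed.

Lemma twist0l b : twist (fun _ => 0%N) b = 1.
Proof. by rewrite /Defs.twist; apply: big1 => i _; apply: big1 => j _; rewrite mul0n expr0. Qed.
Lemma twist0r b : twist b (fun _ => 0%N) = 1.
Proof. by rewrite /Defs.twist; apply: big1 => i _; apply: big1 => j _; rewrite muln0 expr0. Qed.

Lemma Amul_1l a m : Amul (Aone R) a m = a m.
Proof.
rewrite /Defs.Amul (@sum_dffun1 R m (fun _ => 0%N)).
  have -> : [forall i : 'I_4, 0 <= m i]%N by apply/forallP.
  rewrite mkd_fun; last by apply/forallP.
  rewrite mkd_fun2; last by apply/forallP.
  rewrite /= twist0l Aone0 !mul1r; congr a; apply: funext => j; exact: subn0.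
by move=> k /=; rewrite mulrC mulrA mulf_eq0 negb_or => /andP[_ /Aone_neq0].
Qed.

Lemma Amul_1r a m : Amul a (Aone R) m = a m.
Proof.
rewrite /Defs.Amul (@sum_dffun1 R m (m)).
  have -> : [forall i : 'I_4, m i <= m i]%N by apply/forallP.
  rewrite mkd_fun2 ?mkd_fun; try by apply/forallP.
  rewrite /= (_ : (fun i => m i - m i)%N = fun _ => 0%N); last by apply: funext => j; exact: subnn.
  by rewrite twist0r Aone0 mulr1 mul1r.
move=> k /=; rewrite mulf_eq0 negb_or => /andP[_ /Aone_neq0 h] i.
have := h i; have := ltn_ord (k i); lia.
Qed.

Lemma Amul_0l a m : Amul (Azero R) a m = 0.
Proof. by apply: big1 => k _; rewrite /Azero /= mulr0 mul0r. Qed.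

Lemma Amul_Azr a i m : Amul a (Az R i) m =
  if (0 < m i)%N then twist (fun j => m j - emon i j)%N (emon i) * a (fun j => m j - emon i j)%N else 0.
Proof.
rewrite /Defs.Amul (@sum_dffun1 R m (fun j => m j - emon i j)%N).
  have -> : [forall j, m j - emon i j <= m j]%N by apply/forallP => j; exact: leq_subr.
  rewrite mkd_fun2 ?mkd_fun /=; try by apply/forallP => j; exact: leq_subr.
  case: ifP => h.
    rewrite (_ : (fun j => m j - (m j - emon i j))%N = emon i) ?Az_e ?mulr1 //.
    apply: funext => j; rewrite /emon; case: eqP => [->|_]; lia.
  rewrite /Az; case: ifP; rewrite ?mulr0 // => /forallP /(_ i) /eqP; rewrite eqxx /emon eqxx; lia.
move=> k /=; rewrite mulf_eq0 negb_or => /andP[_ /Az_neq0 h] j.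
have := h j; have := ltn_ord (k j); lia.
Qed.

Lemma Amul_Azl a i m : Amul (Az R i) a m =
  if (0 < m i)%N then twist (emon i) (fun j => m j - emon i j)%N * a (fun j => m j - emon i j)%N else 0.
Proof.
rewrite /Defs.Amul (@sum_dffun1 R m (emon i)).
  have hh : [forall j, emon i j <= m j]%N = (0 < m i)%N.
    apply/forallP/idP => [/(_ i)|h j]; first by rewrite /emon eqxx.
    by rewrite /emon; case: eqP => [->|].
  rewrite hh; case: ifP => // h.
  by rewrite mkd_fun2 ?mkd_fun ?hh //= Az_e mulr1.
move=> k /=; rewrite mulrC mulrA mulf_eq0 negb_or => /andP[_ /Az_neq0 h] j.
exact: h.
Qed.

End B.
Section Cx.
Variable R : realType.
Local Notation C := (R[i]).

Lemma cmulE (a b c d : R) : (Complex a b : C) * Complex c d = Complex (a*c - b*d) (a*d + b*c).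
Proof. by []. Qed.

Lemma eixD (x y : R) : eix (x + y) = eix x * eix y.
Proof. rewrite /eix cmulE cosD sinD; congr Complex; ring. Qed.

Lemma eix0 : eix (0 : R) = 1.
Proof. by rewrite /eix cos0 sin0. Qed.

Lemma eixN (x : R) : eix (- x) * eix x = 1.
Proof. by rewrite -eixD addNr eix0. Qed.

Lemma eix_neq0 (x : R) : eix x != 0.
Proof. apply/eqP => h; have := eixN x; rewrite h mulr0 => /eqP; by rewrite eq_sym oner_eq0. Qed.

Lemma eixNV (x : R) : eix (- x) = (eix x)^-1.
Proof. apply: (mulIf (eix_neq0 x)); by rewrite eixN mulVf ?eix_neq0. Qed.

Lemma eix4 (x : R) : eix x = eix (x / 4) ^+ 4.
Proof.
rewrite {1}(_ : x = x/4 + x/4 + x/4 + x/4); last by field.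
by rewrite !eixD; ring.
Qed.

Lemma ci2 : ci R * ci R = -1.
Proof. by rewrite /ci cmulE; congr Complex; ring. Qed.

End Cx.
Section Rm.
Variable R : realType.
Variable theta : R.
Local Notation C := (R[i]).
Local Notation Rm := (Rmat theta).

Lemma mx_of_seqE n l (i j : 'I_n) : mx_of_seq n l i j = nth 0 (nth [::] l i) j :> R[i].
Proof. by rewrite mxE. Qed.

Lemma Rii i : Rm i i = 1.
Proof. by case: i => [[|[|[|[|?]]]] ?] //; rewrite /Rmat mx_of_seqE. Qed.

Lemma Rsym i j : Rm i j * Rm j i = 1.
Proof.
case: i => [[|[|[|[|?]]]] ?] //; case: j => [[|[|[|[|?]]]] ?] //;
  rewrite /Rmat !mx_of_seqE /= ?mulr1 ?mul1r ?eixN //; by rewrite mulrC eixN.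
Qed.

Lemma Rneq0 i j : Rm i j != 0.
Proof. apply/eqP => h; have := Rsym i j; rewrite h mul0r => /eqP; by rewrite eq_sym oner_eq0. Qed.

Lemma twist_e (i : 'I_4) (b : mon) :
  twist theta (emon i) b = twist theta b (emon i) * \prod_(j < 4) Rm j i ^+ b j.
Proof.
rewrite /twist.
have -> : \prod_(i0 < 4) \prod_(j < 4 | (j < i0)%N) Rm j i0 ^+ (emon i i0 * b j)
   = \prod_(j < 4 | (j < i)%N) Rm j i ^+ b j.
  rewrite (bigD1 i) //= [X in _ * X]big1 ?mulr1 => [|i' hi']; last first.
    by apply: big1 => j _; rewrite /emon (negbTE hi') mul0n expr0.
  by apply: eq_bigr => j _; rewrite /emon eqxx mul1n.
have -> : \prod_(i0 < 4) \prod_(j < 4 | (j < i0)%N) Rm j i0 ^+ (b i0 * emon i j)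
   = \prod_(j < 4 | (i < j)%N) Rm i j ^+ b j.
  rewrite [RHS]big_mkcond /=; apply: eq_bigr => i' _.
  case: ltnP => h.
    rewrite (bigD1 i) //= [X in _ * X]big1 ?mulr1 => [|j /andP[_ hj]]; first by rewrite /emon eqxx muln1.
    by rewrite /emon (negbTE hj) muln0 expr0.
  apply: big1 => j hj; rewrite /emon; case: eqP => [e|_]; last by rewrite muln0 expr0.
  by move: hj; rewrite e ltnNge h.
rewrite [X in _ = _ * X](bigID (fun j : 'I_4 => (j < i)%N)) /=.
rewrite [X in _ = _ * (_ * X)](bigD1 i) /=; last by rewrite ltnn.
rewrite Rii expr1n mul1r.
rewrite [X in _ = _ * (_ * X)](eq_bigl (fun j : 'I_4 => (i < j)%N)); last first.
  move=> j; rewrite -leqNgt leq_eqVlt; apply/idP/idP.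
    by case/andP => /orP [/eqP/val_inj e|//]; subst i; rewrite eqxx.
  move=> hh; apply/andP; split; first by rewrite hh orbT.
  by apply/eqP => e; move: hh; rewrite e ltnn.
rewrite mulrCA -big_split /= [X in _ * X]big1 ?mulr1 // => j _.
by rewrite -exprMn Rsym expr1n.
Qed.

Lemma twist_neq0 a b : twist theta a b != 0.
Proof.
rewrite /twist; rewrite prodf_seq_neq0; apply/allP => i _; apply/implyP => _.
rewrite prodf_seq_neq0; apply/allP => j _; apply/implyP => _.
by rewrite expf_neq0 // Rneq0.
Qed.

End Rm.
Section Lin.
Variable R : realType.
Variable theta : R.
Local Notation C := (R[i]).
Local Notation Amul := (Amul theta).
Local Notation phiA := (phiA theta).

Lemma Amul_comm_z i y m : Amul (Az R i) y m = Amul (phiA i y) (Az R i) m.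
Proof. by rewrite Amul_Azl Amul_Azr; case: ifP => // _; rewrite /phiA twist_e mulrA. Qed.

Lemma Amul_Azr_inj y y' i : (forall m, Amul y (Az R i) m = Amul y' (Az R i) m) -> forall m, y m = y' m.
Proof.
move=> h m; have := h (fun j => m j + emon i j)%N; rewrite !Amul_Azr /=.
have -> : (0 < m i + emon i i)%N by rewrite /emon eqxx addn1.
have -> : (fun j => m j + emon i j - emon i j)%N = m by apply: funext => j; rewrite addnK.
exact: (mulfI (twist_neq0 R theta m (emon i))).
Qed.

Lemma AmulZl c a b m : Amul (Ascale c a) b m = c * Amul a b m.
Proof. by rewrite /Defs.Amul mulr_sumr; apply: eq_bigr => k _ /=; rewrite /Ascale; ring. Qed.

Lemma AmulZr c a b m : Amul a (Ascale c b) m = c * Amul a b m.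
Proof. by rewrite /Defs.Amul mulr_sumr; apply: eq_bigr => k _ /=; rewrite /Ascale; ring. Qed.

Lemma AmulDl a a' b m : Amul (Aadd a a') b m = Amul a b m + Amul a' b m.
Proof. by rewrite /Defs.Amul -big_split; apply: eq_bigr => k _ /=; rewrite /Aadd; ring. Qed.

Lemma Amul_suml (I : Type) (r : seq I) (F : I -> Aelt R) b m :
  Amul (fun m => \sum_(i <- r) F i m) b m = \sum_(i <- r) Amul (F i) b m.
Proof.
rewrite /Defs.Amul exchange_big /=; apply: eq_bigr => k _.
by rewrite mulr_sumr mulr_suml; apply: eq_bigr => i _.
Qed.

Lemma fs_zero : finsupp (Azero R).
Proof. by exists 0%N => m; rewrite eqxx. Qed.

Lemma fs_add (a b : Aelt R) : finsupp a -> finsupp b -> finsupp (Aadd a b).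
Proof.
move=> [Na ha] [Nb hb]; exists (Na + Nb)%N => m hm i.
have [/eqP ea|/ha h] := boolP (a m == 0); last by have := h i; lia.
rewrite /Aadd ea add0r in hm; have := hb m hm i; lia.
Qed.

Lemma fs_scale c (a : Aelt R) : finsupp a -> finsupp (Ascale c a).
Proof. move=> [N h]; exists N => m; rewrite /Ascale mulf_eq0 negb_or => /andP[_]; exact: h. Qed.

Lemma fs_ext (a b : Aelt R) : finsupp a -> (forall m, b m = a m) -> finsupp b.
Proof. by move=> [N h] e; exists N => m; rewrite e; exact: h. Qed.

Lemma fs_sum (I : Type) (r : seq I) (F : I -> Aelt R) :
  (forall i, finsupp (F i)) -> finsupp (fun m => \sum_(i <- r) F i m).
Proof.
move=> hF; elim: r => [|x r IH].
  by apply: (fs_ext _ _ fs_zero) => m; rewrite big_nil.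
by apply: (fs_ext _ _ (fs_add _ _ (hF x) IH)) => m; rewrite big_cons.
Qed.

Lemma fs_phi i (a : Aelt R) : finsupp a -> finsupp (phiA i a).
Proof. move=> [N h]; exists N => m; rewrite /phiA mulf_eq0 negb_or => /andP[_]; exact: h. Qed.

Lemma fs_Az i : finsupp (Az R i).
Proof. by exists 2%N => m /Az_neq0 h j; rewrite h /emon; case: (j == i). Qed.

Lemma fs_Aone : finsupp (Aone R).
Proof. by exists 1%N => m /Aone_neq0 h j; rewrite h. Qed.

Lemma fs_Amul (a b : Aelt R) : finsupp a -> finsupp b -> finsupp (Amul a b).
Proof.
move=> [Na ha] [Nb hb]; exists (Na + Nb)%N => m hm i.
move: hm; rewrite /Defs.Amul.
case: (pickP (fun k : {dffun forall i : 'I_4, 'I_(m i).+1} =>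
   twist theta (fun i => k i) (fun i => m i - k i)%N * a (fun i => k i) * b (fun i => m i - k i)%N != 0)) => [k /= hk _|h0].
  move: hk; rewrite !mulf_eq0 !negb_or => /andP[/andP[_ /ha h1] /hb h2].
  have := h1 i; have := h2 i; have := ltn_ord (k i); lia.
by rewrite big1 ?eqxx // => k _; move: (h0 k) => /= /negbFE /eqP.
Qed.

End Lin.
Section D.
Variable R : realType.
Variable theta : R.
Local Notation C := (R[i]).
Local Notation Amul := (Amul theta).
Local Notation phiA := (phiA theta).
Variable d : Aelt R -> 'I_4 -> Aelt R.
Hypothesis hd : is_differential theta d.

Lemma Amul_0r (a : Aelt R) m : Amul a (Azero R) m = 0.
Proof. by apply: big1 => k _; rewrite /Azero /= mulr0. Qed.

Lemma d_ext (a b : Aelt R) : (forall m, a m = b m) -> d a = d b.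
Proof. by move=> e; congr d; apply: funext. Qed.

Lemma d_zero k m : d (Azero R) k m = 0.
Proof.
case: hd => _ hs _ _.
rewrite (d_ext (Azero R) (Ascale 0 (Azero R))); last by move=> m'; rewrite /Ascale /Azero mul0r.
by rewrite hs /Ascale ?mul0r //; exact: fs_zero.
Qed.

Lemma d_sum (I : Type) (r : seq I) (F : I -> Aelt R) :
  (forall i, finsupp (F i)) ->
  forall k m, d (fun m => \sum_(i <- r) F i m) k m = \sum_(i <- r) d (F i) k m.
Proof.
move=> hF k m; case: hd => ha _ _ _; elim: r => [|x r IH].
  rewrite big_nil (d_ext (fun m => \sum_(i <- [::]) F i m) (Azero R)).
    exact: (d_zero).
  by move=> m'; rewrite big_nil.
rewrite big_cons (d_ext _ (Aadd (F x) (fun m => \sum_(i <- r) F i m))); last first.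
  by move=> m'; rewrite big_cons.
rewrite ha; first by rewrite /Aadd IH.
  exact: hF.
exact: fs_sum.
Qed.

Lemma d_scaler c (a : Aelt R) k m : finsupp a -> d (fun m => a m * c) k m = d a k m * c.
Proof.
case: hd => _ hs _ _ ha.
rewrite (d_ext _ (Ascale c a)); last by move=> m'; rewrite /Ascale mulrC.
by rewrite hs // /Ascale mulrC.
Qed.

Lemma phi_Az k i : phiA k (Az R i) = Ascale (Rmat theta i k) (Az R i).
Proof.
apply: funext => m; rewrite /phiA /Ascale.
case: (Az R i m =P 0) => [->|/eqP /Az_neq0 h]; first by rewrite !mulr0.
have -> : m = emon i by apply: funext.
congr (_ * _); rewrite (bigD1 i) //= big1 ?mulr1 => [|j hj]; first by rewrite /emon eqxx expr1.
by rewrite /emon (negbTE hj) expr0.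
Qed.

Lemma d_phi i (x : Aelt R) k m : finsupp x -> d (phiA i x) k m = Rmat theta k i * phiA i (d x k) m.
Proof.
move=> hx; case: hd => ha hs hm hz.
have key : forall m, Amul (phiA i (d x k)) (Az R i) m = Amul (Ascale (Rmat theta i k) (d (phiA i x) k)) (Az R i) m.
  move=> m'; rewrite -Amul_comm_z AmulZl -AmulZr -phi_Az.
  have e1 := congr1 (fun f => f k m') (hm _ _ (fs_Az R i) hx).
  have e2 := congr1 (fun f => f k m') (hm _ _ (@fs_phi R theta i x hx) (fs_Az R i)).
  have e : Amul (Az R i) x = Amul (phiA i x) (Az R i) by apply: funext => m''; exact: Amul_comm_z.
  rewrite e e2 /= hz /Aadd in e1.
  case: (k =P i) e1 => [ek|/eqP/negbTE nek]; last by rewrite Amul_0l Amul_0r add0r addr0 => ->.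
  subst k; rewrite Amul_1l Amul_1r => e1.
  by apply: (addIr (phiA i x m')); rewrite -e1 addrC.
have := (@Amul_Azr_inj R theta _ _ i key m); rewrite /Ascale => ->.
by rewrite mulrA (mulrC (Rmat theta k i)) Rsym mul1r.
Qed.

End D.
Section P2.
Variable R : realType.
Variable theta : R.
Variable d : Aelt R -> 'I_4 -> Aelt R.
Hypothesis hd : is_differential theta d.

Lemma part2 (w : Om1 R) (s : Esp R) :
  (forall i, finsupp (w i)) -> (forall a, finsupp (s a)) ->
  nabla_sp d (gammaA theta (tensOE theta w s)) = id_gammaA theta (nabla_tens theta d w s).
Proof.
move=> hw hs; apply: funext => k; apply: funext => b; apply: funext => m.
have hT : forall i a, finsupp (tensOE theta w s i a).
  by move=> i a; apply: (@fs_Amul R theta) => //; apply: (@fs_phi R theta).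
rewrite /nabla_sp /gammaA /id_gammaA (@d_sum R theta d hd); last first.
  by move=> i; apply: (@fs_sum R) => a; apply: (@fs_ext R _ _ (@fs_scale R (gamma_theta theta i b a) _ (hT i a))) => m'; rewrite /Ascale mulrC.
apply: eq_bigr => i _.
rewrite (@d_sum R theta d hd); last first.
  by move=> a; apply: (@fs_ext R _ _ (@fs_scale R (gamma_theta theta i b a) _ (hT i a))) => m'; rewrite /Ascale mulrC.
apply: eq_bigr => a _.
rewrite (@d_scaler R theta d hd) //; congr (_ * _).
case: hd => _ _ hm _.
rewrite /tensOE hm; last by apply: (@fs_phi R theta).
  2: exact: hw.
have -> : d (phiA theta i (s a)) k = Ascale (Rmat theta k i) (phiA theta i (d (s a) k)).
  by apply: funext => m'; rewrite (@d_phi R theta d hd).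
rewrite /Aadd AmulZr /nabla_tens /add2E /Aadd /tens2E /sigma_id /tensO1E /nablaO /nabla_sp /=.
by rewrite addrC.
Qed.
End P2.
Section G.
Variable R : realType.
Variable theta : R.
Local Notation C := (R[i]).

Lemma offdiagE (U L : 'M[C]_2) (i j : 'I_4) : offdiag U L i j =
  if (i < 2)%N then (if (j < 2)%N then 0 else U (inord i) (inord (j - 2)))
  else (if (j < 2)%N then L (inord (i - 2)) (inord j) else 0).
Proof.
rewrite /offdiag /block_mx mxE; case: splitP => i' hi'; rewrite mxE; case: splitP => j' hj';
  rewrite ?mxE hi' hj' ?ltn_ord ?ltnNge ?leq_addr //=;
  by congr fun_of_matrix; apply: val_inj; rewrite /= inordK ?addKn // ltnS -ltnS ?ltn_ord //.
Qed.
End G.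
Section G2.
Variable R : realType.
Variable theta : R.
Local Notation C := (R[i]).

Lemma cp2 : ci R *: pauli2 R = mx_of_seq 2 [:: [:: 0; 1]; [:: -1; 0]].
Proof.
apply/matrixP => x y; rewrite !mxE.
case: x => [[|[|?]] ?] //; case: y => [[|[|?]] ?] //=; rewrite ?mulr0 //.
  by rewrite mulrN ci2 opprK.
by rewrite ci2.
Qed.

Ltac mx2 := let x := fresh "x" in let y := fresh "y" in
  apply/matrixP => x y; rewrite ?cp2 !mxE;
  case: x => [[|[|?]] ?] //; case: y => [[|[|?]] ?] //=; rewrite ?mxE /=; ring.

Lemma mA : pauli1 R + ci R *: pauli2 R = mx_of_seq 2 [:: [:: 0; 2]; [:: 0; 0]].
Proof. mx2. Qed.
Lemma mB : - pauli1 R - ci R *: pauli2 R = mx_of_seq 2 [:: [:: 0; -2]; [:: 0; 0]].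
Proof. mx2. Qed.
Lemma mC : - pauli1 R + ci R *: pauli2 R = mx_of_seq 2 [:: [:: 0; 0]; [:: -2; 0]].
Proof. mx2. Qed.
Lemma mD : pauli1 R - ci R *: pauli2 R = mx_of_seq 2 [:: [:: 0; 0]; [:: 2; 0]].
Proof. mx2. Qed.
Lemma mE : - pauli3 R - 1%:M = mx_of_seq 2 [:: [:: -2; 0]; [:: 0; 0]].
Proof. mx2. Qed.
Lemma mF : pauli3 R - 1%:M = mx_of_seq 2 [:: [:: 0; 0]; [:: 0; -2]].
Proof. mx2. Qed.
Lemma mG : - pauli3 R + 1%:M = mx_of_seq 2 [:: [:: 0; 0]; [:: 0; 2]].
Proof. mx2. Qed.
Lemma mH : pauli3 R + 1%:M = mx_of_seq 2 [:: [:: 2; 0]; [:: 0; 0]].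
Proof. mx2. Qed.
End G2.
Section G3.
Variable R : realType.
Variable theta : R.
Local Notation C := (R[i]).

Definition gtab (q : C) (i b a : nat) : C :=
 match i, b, a with
 | 0%N, 0%N, 3%N => -2 * q | 0%N, 2%N, 1%N => 2 * q^-1
 | 1%N, 0%N, 2%N => -2 * q^-1 | 1%N, 3%N, 1%N => -2 * q
 | 2%N, 1%N, 2%N => -2 * q | 2%N, 3%N, 0%N => 2 * q^-1
 | 3%N, 1%N, 3%N => 2 * q^-1 | 3%N, 2%N, 0%N => 2 * q
 | _, _, _ => 0 end.

Lemma gammaE (i b a : 'I_4) : gamma_theta theta i b a = gtab (eix (theta/4)) i b a.
Proof.
rewrite /gamma_theta /= eixNV (mA R) (mB R) (mC R) (mD R) (mE R) (mF R) (mG R) (mH R).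
case: i => [[|[|[|[|?]]]] ?] //=;
case: b => [[|[|[|[|?]]]] ?] //; case: a => [[|[|[|[|?]]]] ?] //;
rewrite offdiagE /= ?mxE ?inordK //= ; ring.
Qed.
End G3.
Section G4.
Variable R : realType.
Variable theta : R.
Local Notation C := (R[i]).

Lemma eixNth : eix (- theta) = (eix (theta / 4))^-1 ^+ 4.
Proof. by rewrite eixNV (@eix4 R theta) exprVn. Qed.

Lemma cliff (i j b a : 'I_4) :
  \sum_(c < 4) gamma_theta theta i b c * gamma_theta theta j c a
  + Rmat theta j i * \sum_(c < 4) gamma_theta theta j b c * gamma_theta theta i c a
  = -2 * ginv R i j * (b == a)%:R.
Proof.
have hq := @eix_neq0 R (theta / 4).
rewrite !big_ord_recl !big_ord0 !gammaE /ginv /Rmat !mxE /=.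
rewrite eixNth (@eix4 R theta).
move: hq; set q := eix (theta / 4) => hq.
case: i => [[|[|[|[|?]]]] ?] //; case: j => [[|[|[|[|?]]]] ?] //;
case: b => [[|[|[|[|?]]]] ?] //; case: a => [[|[|[|[|?]]]] ?] //=; by field.
Qed.
End G4.
Section G5.
Variable R : realType.
Variable theta : R.
Local Notation C := (R[i]).

Lemma Rg (i j k : 'I_4) : ginv R i j != 0 -> Rmat theta k i * Rmat theta k j = 1.
Proof.
rewrite /ginv /Rmat !mxE.
case: i => [[|[|[|[|?]]]] ?] //; case: j => [[|[|[|[|?]]]] ?] //;
case: k => [[|[|[|[|?]]]] ?] //=; rewrite ?mulr0 ?eqxx // => _;
rewrite ?mulr1 ?mul1r ?eixN //; by rewrite mulrC eixN.
Qed.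

Lemma phi2_ginv (i j : 'I_4) (x : Aelt R) m :
  ginv R i j * phiA theta i (phiA theta j x) m = ginv R i j * x m.
Proof.
case: (ginv R i j =P 0) => [->|/eqP h]; first by rewrite !mul0r.
congr (_ * _); rewrite /phiA mulrA -big_split /= big1 ?mul1r // => k _.
by rewrite -exprMn Rg // expr1n.
Qed.
End G5.
Section P1.
Variable R : realType.
Variable theta : R.
Local Notation C := (R[i]).
Local Notation gam := (gamma_theta theta).

Lemma gamma2E (V : Om2E R) b m : gamma2A theta V b m =
  \sum_(i < 4) \sum_(j < 4) \sum_(a < 4) V i j a m * (\sum_(c < 4) gam i b c * gam j c a).
Proof.
rewrite /gamma2A /gammaA /id_gammaA; apply: eq_bigr => i _.
rewrite (eq_bigr (fun c => \sum_(j < 4) \sum_(a < 4) V i j a m * gam j c a * gam i b c)); last first.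
  by move=> c _; rewrite mulr_suml; apply: eq_bigr => j _; rewrite mulr_suml.
rewrite exchange_big; apply: eq_bigr => j _; rewrite exchange_big; apply: eq_bigr => a _.
by rewrite mulr_sumr; apply: eq_bigr => c _; rewrite -mulrA (mulrC (gam j c a)).
Qed.

Lemma AmulZl' c (a b : Aelt R) m : Amul theta (fun m => c * a m) b m = c * Amul theta a b m.
Proof. exact: AmulZl. Qed.

Lemma AmulZl'' c (a b : Aelt R) m : Amul theta (fun m => a m * c) b m = c * Amul theta a b m.
Proof. rewrite -AmulZl (_ : (fun m => a m * c) = Ascale c a) //; apply: funext => m'; by rewrite /Ascale mulrC. Qed.

Lemma phi_comm i j (x : Aelt R) : phiA theta i (phiA theta j x) = phiA theta j (phiA theta i x).
Proof. by apply: funext => m; rewrite /phiA mulrCA. Qed.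

Lemma part1 (W : Om2 R) (s : Esp R) :
  addE (gamma2A theta (tens2E theta W s)) (gamma2A theta (tens2E theta (sigmaO theta W) s))
  = fun a => Amul theta (Ascale (-2) (ginvA W)) (s a).
Proof.
apply: funext => b; apply: funext => m.
rewrite /addE /Aadd !gamma2E /tens2E /sigmaO.
under [X in _ + X = _]eq_bigr do under eq_bigr do under eq_bigr do rewrite AmulZl'.
rewrite [X in _ + X = _]exchange_big /= -big_split /=.
rewrite AmulZl /ginvA Amul_suml mulr_sumr; apply: eq_bigr => i _.
rewrite -big_split /= Amul_suml mulr_sumr; apply: eq_bigr => j _.
rewrite -big_split /=.
have fact : forall x y z w : C, x * y + z * x * w = x * (y + z * w) by move=> *; ring.
under eq_bigr => a _.
  rewrite (phi_comm j i) fact.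
  rewrite (_ : _ + _ = -2 * ginv R i j * (b == a)%:R); last first.
    by rewrite -(@cliff R theta i j b a); congr (_ + _ * _); apply: eq_bigr => c _; rewrite mulrC.
  over.
rewrite (bigD1 b) //= big1 ?addr0; last by move=> a hab; rewrite eq_sym (negbTE hab) /= mulr0n !mulr0.
rewrite eqxx mulr1 AmulZl''.
have e : ginv R i j * Amul theta (W i j) (phiA theta i (phiA theta j (s b))) m
       = ginv R i j * Amul theta (W i j) (s b) m.
  rewrite -!AmulZr; congr Defs.Amul; apply: funext => m'.
  by rewrite /Ascale phi2_ginv.
rewrite -e; ring.
Qed.
End P1.

Theorem proposition4p6 (R : realType) (theta : R) (d : Aelt R -> 'I_4 -> Aelt R) :
  is_differential theta d ->
  (* Clifford relations *)
  (forall (w z : Om1 R) (s : Esp R),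
     (forall i, finsupp (w i)) -> (forall i, finsupp (z i)) -> (forall a, finsupp (s a)) ->
     addE (gamma2A theta (tens2E theta (tensOO theta w z) s))
          (gamma2A theta (tens2E theta (sigmaO theta (tensOO theta w z)) s))
     = fun a => Amul theta (Ascale (-2) (ginvA (tensOO theta w z))) (s a))
  /\
  (* Clifford compatibility: nabla^sp o gamma = (id (x) gamma) o nabla^(x) *)
  (forall (w : Om1 R) (s : Esp R),
     (forall i, finsupp (w i)) -> (forall a, finsupp (s a)) ->
     nabla_sp d (gammaA theta (tensOE theta w s))
     = id_gammaA theta (nabla_tens theta d w s)).
Proof.
move=> hd; split.
  by move=> w z s _ _ _; exact: part1.
by move=> w s hw hs; exact: part2.
Qed.
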